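(* Let $(\Omega,\mathcal{F})$ be a measurable space, let $\mathrm{B}_b$ denote the space of all bounded real-valued $\mathcal{F}$-measurable functions on $\Omega$, and let $C\subset \mathrm{B}_b$ be a set with $0\in C$ and $X+m\in C$ for all $X\in C$ and $m\in\mathbb{R}$. A map $H\colon C\to\mathbb{R}$ is a premium principle if and only if there exist a risk measure $R\colon \mathrm{B}_b\to\mathbb{R}$ and a deviation measure $D\colon C\to\mathbb{R}$ such that $$H(X)=R(X)+D(X)\quad\text{for all }X\in C.$$
   Context: Constants are identified with constant functions, and $\le$ denotes the pointwise order on $\mathrm{B}_b$. A map $H\colon C\to\mathbb{R}$ is a premium principle if (P1) $H(X+m)=H(X)+m$ for all $X\in C$, $m\in\mathbb{R}$, and (P2) $H(0)=0$ and $H(X)\ge 0$ for all $X\in C$ with $X\ge 0$. A map $R\colon \mathrm{B}_b\to\mathbb{R}$ is a risk measure if $R(X+m)=R(X)+m$ for all $X\in\mathrm{B}_b$, $m\in\mathbb{R}$, and $R(0)=0$ and $R(X)\le R(Y)$ whenever $X\le Y$. A map $D\colon C\to\mathbb{R}$ is a deviation measure if $D(X+m)=D(X)$ for all $X\in C$, $m\in\mathbb{R}$, and $D(0)=0$ and $D(X)\ge 0$ for all $X\in C$. *)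

(* Defs.v *)
From HB Require Import structures.
From mathcomp Require Import all_boot all_order all_algebra.
From mathcomp Require Import boolp classical_sets reals measure lebesgue_measure.
Set Implicit Arguments. Unset Strict Implicit. Unset Printing Implicit Defensive.
Import Order.TTheory GRing.Theory Num.Theory.
Local Open Scope ring_scope.
Local Open Scope classical_set_scope.

Section Defs.
Context {d : measure_display} {T : measurableType d} {R : realType}.

Definition Bb (X : T -> R) : Prop :=
  measurable_fun setT X /\ exists M : R, forall w, `|X w| <= M.

Definition addc (X : T -> R) (m : R) : T -> R := fun w => X w + m.

Definition fle (X Y : T -> R) : Prop := forall w, X w <= Y w.

(* A map H : C -> R is modelled by H : (T -> R) -> R, only its values on C matter. *)
Definition premium_principle (C : set (T -> R)) (H : (T -> R) -> R) : Prop :=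
  (forall X m, C X -> H (addc X m) = H X + m) /\
  H (fun _ => 0) = 0 /\
  (forall X, C X -> fle (fun _ => 0) X -> 0 <= H X).

(* A map rho : B_b -> R, modelled on all functions, only values on Bb matter. *)
Definition risk_measure (rho : (T -> R) -> R) : Prop :=
  (forall X m, Bb X -> rho (addc X m) = rho X + m) /\
  rho (fun _ => 0) = 0 /\
  (forall X Y, Bb X -> Bb Y -> fle X Y -> rho X <= rho Y).

Definition deviation_measure (C : set (T -> R)) (D : (T -> R) -> R) : Prop :=
  (forall X m, C X -> D (addc X m) = D X) /\
  D (fun _ => 0) = 0 /\
  (forall X, C X -> 0 <= D X).

End Defs.

(* Main.v *)
Require Import Defs.
From mathcomp Require Import all_boot all_order all_algebra.
From mathcomp Require Import boolp classical_sets reals measure lebesgue_measure.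
From mathcomp Require Import lra measurable_realfun.
Import Order.TTheory GRing.Theory Num.Theory.
Local Open Scope ring_scope.
Local Open Scope classical_set_scope.


Section Aux.
Context {d : measure_display} {T : measurableType d} {R : realType}.

Lemma bb_lb (X : T -> R) : Bb X -> has_lbound (range X).
Proof.
move=> [_ [M HM]]; exists (- M) => _ [w _ <-].
have := HM w; rewrite ler_norml => /andP[] //.
Qed.

Lemma inf_range_ge (X : T -> R) w : Bb X -> inf (range X) <= X w.
Proof. move=> hX; have := ge_inf (bb_lb X hX); apply; by exists w. Qed.

Lemma inf_range_lb (X : T -> R) (w0 : T) x :
  (forall w, x <= X w) -> x <= inf (range X).
Proof.
move=> h; apply: lb_le_inf; first by exists (X w0), w0.
by move=> _ [w _ <-].
Qed.

Lemma bb_addc (X : T -> R) m : Bb X -> Bb (addc X m).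
Proof.
move=> [mX [M HM]]; split.
  rewrite /addc; apply: measurable_funD => //; exact: measurable_cst.
exists (M + `|m|) => w; rewrite /addc.
apply: le_trans (ler_normD _ _) _; rewrite lerD2r; exact: HM.
Qed.

End Aux.

Theorem theorem2p2 (d : measure_display) (T : measurableType d) (R : realType)
  (C : set (T -> R))
  (hCB : forall X, C X -> Bb X)
  (hC0 : C (fun _ => 0))
  (hCm : forall X m, C X -> C (addc X m))
  (H : (T -> R) -> R) :
  premium_principle C H <->
  exists (rho D : (T -> R) -> R),
    risk_measure rho /\ deviation_measure C D /\
    (forall X, C X -> H X = rho X + D X).
Proof.
split.
- move=> [Htr [H0 Hpos]].
  have [w0 | Tempty] := pselect (exists w : T, True).
  + case: w0 => w0 _.
    pose rho (X : T -> R) := inf (range X).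
    have rtr : forall X m, Bb X -> rho (addc X m) = rho X + m.
      move=> X m hX; apply/le_anti/andP; split.
        rewrite -lerBlDr /rho; apply: (@inf_range_lb _ _ _ _ w0) => w.
        rewrite lerBlDr; exact: (inf_range_ge (addc X m) w (bb_addc X m hX)).
      rewrite /rho; apply: (@inf_range_lb _ _ _ _ w0) => w; rewrite /addc lerD2r.
      exact: inf_range_ge.
    exists rho, (fun X => H X - rho X); split; [split; [|split]|split; [split; [|split]|]].
    * exact: rtr.
    * apply/le_anti/andP; split; first exact: (@inf_range_ge _ _ _ (fun _ : T => 0) w0 (hCB _ hC0)).
      exact: (@inf_range_lb _ _ _ _ w0).
    * move=> X Y hX hY hXY; apply: (@inf_range_lb _ _ _ _ w0) => w.
      exact: le_trans (inf_range_ge X w hX) (hXY w).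
    * move=> X m hX /=; rewrite Htr // rtr; [lra | exact: hCB].
    * rewrite H0 /=.
      have -> : rho (fun _ => 0) = 0; last by rewrite subr0.
      apply/le_anti/andP; split; first exact: (@inf_range_ge _ _ _ (fun _ : T => 0) w0 (hCB _ hC0)).
      exact: (@inf_range_lb _ _ _ _ w0).
    * move=> X hX /=.
      have := Hpos (addc X (- rho X)) (hCm _ _ hX).
      rewrite Htr //; apply => w; rewrite /addc subr_ge0; exact: (inf_range_ge X w (hCB _ hX)).
    * move=> X _ /=; lra.
  + exfalso.
    have e : addc (fun _ : T => (0:R)) 1 = (fun _ : T => (0:R)).
      by apply: boolp.funext => w; exfalso; apply: Tempty; exists w.

    have := Htr _ 1 hC0; rewrite e H0 add0r => /eqP; by rewrite eq_sym oner_eq0.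
- move=> [rho [D [[rtr [r0 rmon]] [[Dtr [D0 Dpos]] hHD]]]].
  have B0 : Bb (fun _ : T => (0 : R)) by exact: hCB.
  split; [|split].
  + move=> X m hX; rewrite !hHD //; last exact: hCm.
    rewrite rtr ?Dtr //; [lra | exact: hCB].
  + by rewrite hHD // r0 D0 addr0.
  + move=> X hX h0; rewrite hHD //; apply: addr_ge0; last exact: Dpos.
    by rewrite -r0; apply: rmon => //; exact: hCB.
Qed.
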